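(* Fix $e\in -\mathrm{int}(C)$ and define $v_e:\mathcal P^0_{\mp C}(Y)\to\overline{\mathbb R}^2$ by $v_e(A)=w_e(\{0\},A)=\big(-G^\ell_e(\{0\},A),\,G^u_e(A,\{0\})\big)$. Then $v_e$ is $s$-increasing on $\mathcal P^0_{\mp C}(Y)$, strictly $s$-increasing on the family of $\mp C$-compact sets in $\mathcal P^0_{\mp C}(Y)$, and for $A,B\in\mathcal P^0_{\mp C}(Y)$ with $A\in[B]^s$ one has $v_e(A)=v_e(B)$.
   Context: $Y$ is a real topological linear space and $C\subset Y$ is a convex, closed, pointed cone with nonempty interior. $\mathbb R^2$ is ordered by $\mathbb R^2_+$ ($a\le b$ iff $b-a\in\mathbb R^2_+$, $a<b$ iff $b-a\in\mathrm{int}\,\mathbb R^2_+$). $\mathcal P^0_{\mp C}(Y)$ is the family of nonempty $A\subset Y$ with $A+C\neq Y$ and $A-C\neq Y$. $C$-compact: every cover by sets $U_\alpha+C$, $U_\alpha$ open, has a finite subcover; $\mp C$-compact: $C$-compact and $-C$-compact. $A\preceq^s B$ iff $B\subset A+C$ and $A\subset B-C$; $A\prec^s B$ iff $B\subset A+\mathrm{int}C$ and $A\subset B-\mathrm{int}C$; $[A]^s$ is the class of $A$ under $A\sim^s B\iff (A\preceq^sB\text{ and }B\preceq^sA)$. $\phi_{e,A}(y)=\inf\{t\in\mathbb R: y\in te+A+C\}$; $G^\ell_e(A,B)=\sup_{b\in B}\phi_{e,A}(b)$; $G^u_e(B,A):=-G^\ell_e(-B,-A)$; $w_e(A,B)=(-G^\ell_e(A,B),G^u_e(B,A))$.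 A map $T$ is $s$-increasing on $\mathcal A$ if $A,B\in\mathcal A$, $A\preceq^sB$ imply $T(A)\le_{\mathbb R^2_+}T(B)$; strictly $s$-increasing if $A\prec^sB$ implies $T(A)<_{\mathbb R^2_+}T(B)$. *)

(* Defs.v *)
From Stdlib Require Import Reals List ClassicalEpsilon.
Open Scope R_scope.

Record TLS := {
  car :> Type;
  vzero : car;
  vadd : car -> car -> car;
  vopp : car -> car;
  vscal : R -> car -> car;
  vaddA : forall x y z, vadd x (vadd y z) = vadd (vadd x y) z;
  vaddC : forall x y, vadd x y = vadd y x;
  vadd0 : forall x, vadd x vzero = x;
  vaddN : forall x, vadd x (vopp x) = vzero;
  vscal1 : forall x, vscal 1 x = x;
  vscalA : forall a b x, vscal a (vscal b x) = vscal (a * b) x;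
  vscalDr : forall a x y, vscal a (vadd x y) = vadd (vscal a x) (vscal a y);
  vscalDl : forall a b x, vscal (a + b) x = vadd (vscal a x) (vscal b x);
  is_open : (car -> Prop) -> Prop;
  open_full : is_open (fun _ => True);
  open_union : forall (I : Type) (F : I -> car -> Prop),
      (forall i, is_open (F i)) -> is_open (fun x => exists i, F i x);
  open_inter : forall U V, is_open U -> is_open V -> is_open (fun x => U x /\ V x);
  vadd_cont : forall U x y, is_open U -> U (vadd x y) ->
      exists V W, is_open V /\ is_open W /\ V x /\ W y /\
        forall x' y', V x' -> W y' -> U (vadd x' y');
  vscal_cont : forall U t x, is_open U -> U (vscal t x) ->
      exists eps V, 0 < eps /\ is_open V /\ V x /\
        forall s x', Rabs (s - t) < eps -> V x' -> U (vscal s x')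
}.

Arguments vzero {_}.
Arguments vadd {_}.
Arguments vopp {_}.
Arguments vscal {_}.
Arguments is_open {_}.

Section Sets.
Context {Y : TLS}.
Definition set := Y -> Prop.

Definition set_incl (A B : set) : Prop := forall y, A y -> B y.
Definition set_add (A B : set) : set :=
  fun y => exists a b, A a /\ B b /\ y = vadd a b.
Definition set_opp (A : set) : set := fun y => exists a, A a /\ y = vopp a.
Definition set_sub (A B : set) : set := set_add A (set_opp B).
Definition set_single (x : Y) : set := fun y => y = x.
Definition is_whole (A : set) : Prop := forall y, A y.

Definition set_int (A : set) : set :=
  fun x => exists U, is_open U /\ U x /\ set_incl U A.

Definition is_cone (C : set) : Prop :=
  forall t x, 0 <= t -> C x -> C (vscal t x).
Definition is_convex (C : set) : Prop :=
  forall t x y, 0 <= t <= 1 -> C x -> C y -> C (vadd (vscal t x) (vscal (1 - t) y)).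
Definition is_closed_set (C : set) : Prop := is_open (fun x => ~ C x).
Definition is_pointed (C : set) : Prop :=
  forall x, C x -> C (vopp x) -> x = vzero.
Definition good_cone (C : set) : Prop :=
  is_cone C /\ is_convex C /\ is_closed_set C /\ is_pointed C /\
  exists x, set_int C x.

Definition P0 (C A : set) : Prop :=
  (exists a, A a) /\ ~ is_whole (set_add A C) /\ ~ is_whole (set_sub A C).

Definition K_compact (K A : set) : Prop :=
  forall (I : Type) (U : I -> set),
    (forall i, is_open (U i)) ->
    set_incl A (fun y => exists i, set_add (U i) K y) ->
    exists l : list I, set_incl A (fun y => exists i, In i l /\ set_add (U i) K y).
Definition C_compact (C A : set) : Prop := K_compact C A.
Definition mpC_compact (C A : set) : Prop :=
  K_compact C A /\ K_compact (set_opp C) A.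

Definition set_le_s (C A B : set) : Prop :=
  set_incl B (set_add A C) /\ set_incl A (set_sub B C).
Definition set_lt_s (C A B : set) : Prop :=
  set_incl B (set_add A (set_int C)) /\ set_incl A (set_sub B (set_int C)).
Definition s_equiv (C A B : set) : Prop := set_le_s C A B /\ set_le_s C B A.
Definition s_class (C A : set) : set -> Prop := fun B => s_equiv C A B.
End Sets.

Inductive Rbar := Finite (r : R) | p_infty | m_infty.

Definition Rbar_le (x y : Rbar) : Prop :=
  match x, y with
  | m_infty, _ => True
  | _, p_infty => True
  | Finite a, Finite b => a <= b
  | _, _ => False
  end.
Definition Rbar_lt (x y : Rbar) : Prop := Rbar_le x y /\ x <> y.
Definition Rbar_opp (x : Rbar) : Rbar :=
  match x with Finite a => Finite (- a) | p_infty => m_infty | m_infty => p_infty end.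

Definition Rbar_is_glb (S : Rbar -> Prop) (v : Rbar) : Prop :=
  (forall s, S s -> Rbar_le v s) /\ (forall w, (forall s, S s -> Rbar_le w s) -> Rbar_le w v).
Definition Rbar_is_lub (S : Rbar -> Prop) (v : Rbar) : Prop :=
  (forall s, S s -> Rbar_le s v) /\ (forall w, (forall s, S s -> Rbar_le s w) -> Rbar_le v w).
(* infimum / supremum in the complete lattice Rbar (inf of empty = +oo, sup of empty = -oo) *)
Definition Rbar_inf (S : Rbar -> Prop) : Rbar := epsilon (inhabits p_infty) (Rbar_is_glb S).
Definition Rbar_sup (S : Rbar -> Prop) : Rbar := epsilon (inhabits m_infty) (Rbar_is_lub S).

Definition pair_le (a b : Rbar * Rbar) : Prop :=
  Rbar_le (fst a) (fst b) /\ Rbar_le (snd a) (snd b).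
Definition pair_lt (a b : Rbar * Rbar) : Prop :=
  Rbar_lt (fst a) (fst b) /\ Rbar_lt (snd a) (snd b).

Section Scal.
Context {Y : TLS}.
Definition phi (C : @set Y) (e : Y) (A : set) (y : Y) : Rbar :=
  Rbar_inf (fun v => exists t : R, v = Finite t /\
      exists a c, A a /\ C c /\ y = vadd (vadd (vscal t e) a) c).
Definition Gl (C : @set Y) (e : Y) (A B : set) : Rbar :=
  Rbar_sup (fun v => exists b, B b /\ v = phi C e A b).
Definition Gu (C : @set Y) (e : Y) (B A : set) : Rbar :=
  Rbar_opp (Gl C e (set_opp B) (set_opp A)).
Definition w_e (C : @set Y) (e : Y) (A B : set) : Rbar * Rbar :=
  (Rbar_opp (Gl C e A B), Gu C e B A).
Definition v_e (C : @set Y) (e : Y) (A : set) : Rbar * Rbar :=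
  w_e C e (set_single vzero) A.
End Scal.

(* Main.v *)
Require Import Defs.
From Stdlib Require Import Reals Lra Lia List ClassicalEpsilon Classical FunctionalExtensionality PropExtensionality.
Open Scope R_scope.

Lemma Rbar_le_refl x : Rbar_le x x.
Proof. destruct x; simpl; auto; lra. Qed.
Lemma Rbar_le_trans x y z : Rbar_le x y -> Rbar_le y z -> Rbar_le x z.
Proof. destruct x, y, z; simpl; auto; try tauto; lra. Qed.
Lemma Rbar_le_antisym x y : Rbar_le x y -> Rbar_le y x -> x = y.
Proof. destruct x, y; simpl; try tauto; intros; f_equal; lra. Qed.
Lemma Rbar_opp_le x y : Rbar_le x y -> Rbar_le (Rbar_opp y) (Rbar_opp x).
Proof. destruct x, y; simpl; auto; lra. Qed.
Lemma Rbar_opp_K x : Rbar_opp (Rbar_opp x) = x.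
Proof. destruct x; simpl; auto; f_equal; lra. Qed.

Lemma glb_ex (S : Rbar -> Prop) : exists v, Rbar_is_glb S v.
Proof.
  destruct (classic (S m_infty)) as [Hm|Hm].
  { exists m_infty; split; [intros; simpl; auto|]. intros w Hw. apply Hw; auto. }
  destruct (classic (exists r, S (Finite r))) as [[r0 Hr0]|Hne].
  2:{ exists p_infty; split.
      - intros [r| |] Hs; simpl; auto. apply Hne; eauto.
      - intros w _; destruct w; simpl; auto. }
  destruct (classic (exists m, forall r, S (Finite r) -> m <= r)) as [[m Hm2]|Hub].
  - set (E := fun x => S (Finite (- x))).
    assert (Hb : bound E). { exists (-m). intros x Hx. unfold E in Hx. specialize (Hm2 _ Hx). lra. }
    assert (He : exists x, E x). { exists (- r0). unfold E. rewrite Ropp_involutive. auto. }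
    destruct (completeness E Hb He) as [l [Hl1 Hl2]].
    exists (Finite (- l)); split.
    + intros [r| |] Hs; simpl; auto.
      assert (E (- r)) by (unfold E; rewrite Ropp_involutive; auto).
      specialize (Hl1 _ H). lra.
    + intros [x| |] Hw; simpl; auto.
      * assert (l <= - x). { apply Hl2. intros y Hy. specialize (Hw _ Hy). simpl in Hw. lra. }
        lra.
      * specialize (Hw _ Hr0). simpl in Hw. auto.
  - exists m_infty; split.
    + intros; simpl; auto.
    + intros [x| |] Hw; simpl; auto.
      * apply Hub. exists x. intros r Hr. exact (Hw _ Hr).
      * exact (Hw _ Hr0).
Qed.

Lemma inf_spec S : Rbar_is_glb S (Rbar_inf S).
Proof. unfold Rbar_inf. apply epsilon_spec. apply glb_ex. Qed.

Lemma lub_ex (S : Rbar -> Prop) : exists v, Rbar_is_lub S v.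
Proof.
  destruct (glb_ex (fun x => S (Rbar_opp x))) as [v [H1 H2]].
  exists (Rbar_opp v); split.
  - intros s Hs. rewrite <- (Rbar_opp_K s). apply Rbar_opp_le. apply H1. rewrite Rbar_opp_K; auto.
  - intros w Hw. rewrite <- (Rbar_opp_K w). apply Rbar_opp_le. apply H2.
    intros s Hs. rewrite <- (Rbar_opp_K s). apply Rbar_opp_le. auto.
Qed.

Lemma sup_spec S : Rbar_is_lub S (Rbar_sup S).
Proof. unfold Rbar_sup. apply epsilon_spec. apply lub_ex. Qed.

Lemma inf_le S s : S s -> Rbar_le (Rbar_inf S) s.
Proof. intros; apply (proj1 (inf_spec S)); auto. Qed.
Lemma inf_ge S w : (forall s, S s -> Rbar_le w s) -> Rbar_le w (Rbar_inf S).
Proof. intros; apply (proj2 (inf_spec S)); auto. Qed.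
Lemma sup_ge S s : S s -> Rbar_le s (Rbar_sup S).
Proof. intros; apply (proj1 (sup_spec S)); auto. Qed.
Lemma sup_le S w : (forall s, S s -> Rbar_le s w) -> Rbar_le (Rbar_sup S) w.
Proof. intros; apply (proj2 (sup_spec S)); auto. Qed.

Lemma add0l {Y : TLS} (x : Y) : vadd vzero x = x.
Proof. rewrite vaddC; apply vadd0. Qed.
Lemma addNl {Y : TLS} (x : Y) : vadd (vopp x) x = vzero.
Proof. rewrite vaddC; apply vaddN. Qed.
Lemma add_cancel {Y : TLS} (x y z : Y) : vadd x y = vadd x z -> y = z.
Proof.
  intros H. rewrite <- (add0l y), <- (add0l z), <- (addNl x), <- !vaddA, H; auto.
Qed.
Lemma scal0 {Y : TLS} (x : Y) : vscal 0 x = vzero.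
Proof.
  apply (add_cancel (vscal 0 x)). rewrite <- vscalDl, vadd0. f_equal; ring.
Qed.
Lemma scal0r {Y : TLS} r : vscal r (@vzero Y) = vzero.
Proof.
  apply (add_cancel (vscal r vzero)). rewrite <- vscalDr, !vadd0. auto.
Qed.
Lemma opp_unique {Y : TLS} (x y : Y) : vadd x y = vzero -> y = vopp x.
Proof. intros H. apply (add_cancel x). rewrite H, vaddN; auto. Qed.
Lemma scalN1 {Y : TLS} (x : Y) : vscal (-1) x = vopp x.
Proof.
  apply opp_unique. rewrite <- (vscal1 _ x) at 1. rewrite <- vscalDl.
  replace (1 + -1) with 0 by ring. apply scal0.
Qed.
Lemma add4 {Y : TLS} (a b c d : Y) : vadd (vadd a b) (vadd c d) = vadd (vadd a c) (vadd b d).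
Proof.
  rewrite <- !vaddA. f_equal. rewrite !vaddA. f_equal. apply vaddC.
Qed.

Inductive vexp := VAtom (n : nat) | VZero | VAdd (a b : vexp) | VOpp (a : vexp) | VScal (r : R) (a : vexp).

Fixpoint den {Y : TLS} (env : list Y) (e : vexp) : Y :=
  match e with
  | VAtom n => nth n env vzero
  | VZero => vzero
  | VAdd a b => vadd (den env a) (den env b)
  | VOpp a => vopp (den env a)
  | VScal r a => vscal r (den env a)
  end.

Fixpoint coef (e : vexp) (i : nat) : R :=
  match e with
  | VAtom n => if Nat.eqb n i then 1 else 0
  | VZero => 0
  | VAdd a b => coef a i + coef b i
  | VOpp a => - coef a i
  | VScal r a => r * coef a i
  end.

Fixpoint lin {Y : TLS} (env : list Y) (f : nat -> R) : Y :=
  match env with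
  | nil => vzero
  | x :: env' => vadd (vscal (f O) x) (lin env' (fun i => f (S i)))
  end.

Lemma lin_ext {Y : TLS} (env : list Y) : forall f g,
  (forall i, (i < length env)%nat -> f i = g i) -> lin env f = lin env g.
Proof.
  induction env as [|x env IH]; intros f g H; simpl; auto.
  rewrite (H O) by (simpl; lia). f_equal. apply IH. intros i Hi. apply H. simpl; lia.
Qed.
Lemma lin_add {Y : TLS} (env : list Y) : forall f g,
  lin env (fun i => f i + g i) = vadd (lin env f) (lin env g).
Proof.
  induction env as [|x env IH]; intros f g; simpl. { rewrite vadd0; auto. }
  rewrite vscalDl, (IH (fun i => f (S i)) (fun i => g (S i))). apply add4.
Qed.
Lemma lin_scal {Y : TLS} (env : list Y) : forall r f,
  lin env (fun i => r * f i) = vscal r (lin env f).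
Proof.
  induction env as [|x env IH]; intros r f; simpl. { rewrite scal0r; auto. }
  rewrite vscalDr, vscalA, (IH r (fun i => f (S i))). auto.
Qed.
Lemma lin_opp {Y : TLS} (env : list Y) f :
  lin env (fun i => - f i) = vopp (lin env f).
Proof.
  rewrite <- scalN1, <- lin_scal. apply lin_ext. intros; ring.
Qed.
Lemma lin_zero {Y : TLS} (env : list Y) : lin env (fun _ => 0) = vzero.
Proof.
  induction env as [|x env IH]; simpl; auto. rewrite IH, scal0, vadd0; auto.
Qed.
Lemma lin_ind {Y : TLS} (env : list Y) : forall n,
  lin env (fun i => if Nat.eqb n i then 1 else 0) = nth n env vzero.
Proof.
  induction env as [|x env IH]; intros n; simpl. { destruct n; auto. }
  destruct n as [|m]; simpl.
  - rewrite vscal1. try rewrite (lin_ext env _ (fun _ => 0)) by auto.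
    rewrite lin_zero, vadd0; auto.
  - rewrite scal0, add0l. apply IH.
Qed.
Lemma den_lin {Y : TLS} (env : list Y) e : den env e = lin env (coef e).
Proof.
  induction e; simpl.
  - symmetry; apply lin_ind.
  - symmetry; apply lin_zero.
  - rewrite IHe1, IHe2, <- lin_add. auto.
  - rewrite IHe, <- lin_opp; auto.
  - rewrite IHe, <- lin_scal; auto.
Qed.

Fixpoint allidx (n : nat) (P : nat -> Prop) : Prop :=
  match n with O => True | S m => allidx m P /\ P m end.
Lemma allidx_spec n P : allidx n P -> forall i, (i < n)%nat -> P i.
Proof.
  induction n; simpl; intros H i Hi; [lia|]. destruct H as [H1 H2].
  destruct (Nat.eq_dec i n); [subst; auto|]. apply IHn; auto; lia.
Qed.
Lemma den_eq {Y : TLS} (env : list Y) e1 e2 :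
  allidx (length env) (fun i => coef e1 i = coef e2 i) -> den env e1 = den env e2.
Proof.
  intros H. rewrite !den_lin. apply lin_ext. apply allidx_spec; auto.
Qed.

Ltac lookup x l :=
  lazymatch l with
  | x :: _ => constr:(O)
  | _ :: ?t => let n := lookup x t in constr:(S n)
  end.
Ltac collect t acc :=
  lazymatch t with
  | @vzero _ => acc
  | @vadd _ ?a ?b => let acc1 := collect a acc in collect b acc1
  | @vopp _ ?a => collect a acc
  | @vscal _ _ ?a => collect a acc
  | _ => match constr:(tt) with
         | _ => let _ := lookup t acc in acc
         | _ => constr:(t :: acc)
         end
  end.
Ltac reify env t :=
  lazymatch t with
  | @vzero _ => constr:(VZero)
  | @vadd _ ?a ?b => let ra := reify env a in let rb := reify env b in constr:(VAdd ra rb)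
  | @vopp _ ?a => let ra := reify env a in constr:(VOpp ra)
  | @vscal _ ?r ?a => let ra := reify env a in constr:(VScal r ra)
  | _ => let n := lookup t env in constr:(VAtom n)
  end.
Ltac vsolve :=
  lazymatch goal with
  | |- @eq ?T ?L ?R =>
    let env0 := constr:(@nil T) in
    let env1 := collect L env0 in
    let env := collect R env1 in
    let eL := reify env L in
    let eR := reify env R in
    change (den env eL = den env eR); apply den_eq; simpl;
    repeat split; ring
  end.

Ltac vsolve_f :=
  lazymatch goal with
  | |- @eq ?T ?L ?R =>
    let env0 := constr:(@nil T) in
    let env1 := collect L env0 in
    let env := collect R env1 in
    let eL := reify env L in
    let eR := reify env R in
    change (den env eL = den env eR); apply den_eq; simpl;
    repeat split; field; try lra
  end.

Lemma open_of_local {Y : TLS} (S : Y -> Prop) :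
  (forall x, S x -> exists V, is_open V /\ V x /\ (forall y, V y -> S y)) -> is_open S.
Proof.
  intros H.
  set (I := {V : Y -> Prop | is_open V /\ forall y, V y -> S y}).
  assert (E : S = fun x => exists i : I, proj1_sig i x).
  { apply functional_extensionality; intro x; apply propositional_extensionality; split.
    - intros Hx. destruct (H x Hx) as [V [HV [HVx HVS]]]. exists (exist _ V (conj HV HVS)); auto.
    - intros [[V [HV HVS]] HVx]; simpl in HVx; auto. }
  rewrite E. apply open_union. intros i; destruct i as [V [HV HVS]]; simpl; auto.
Qed.

Lemma open_pre_add {Y : TLS} (U : Y -> Prop) c : is_open U -> is_open (fun x => U (vadd x c)).
Proof.
  intros HU. apply open_of_local; intros x Hx.
  destruct (vadd_cont _ U x c HU Hx) as [V [W [HV [HW [HVx [HWc HVW]]]]]].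
  exists V; split; auto; split; auto; intros y Hy; apply HVW; auto.
Qed.

Lemma open_pre_scal {Y : TLS} (U : Y -> Prop) t : is_open U -> is_open (fun x => U (vscal t x)).
Proof.
  intros HU. apply open_of_local; intros x Hx.
  destruct (vscal_cont _ U t x HU Hx) as [eps [V [Heps [HV [HVx HVU]]]]].
  exists V; split; auto; split; auto; intros y Hy; apply HVU; auto;
  rewrite Rminus_diag, Rabs_R0; auto.
Qed.

Lemma open_pre_oppadd {Y : TLS} (U : Y -> Prop) w : is_open U -> is_open (fun y => U (vadd (vopp y) w)).
Proof.
  intros HU. assert (H := open_pre_scal _ (-1) (open_pre_add U w HU)). simpl in H.
  replace (fun y => U (vadd (vopp y) w)) with (fun x => U (vadd (vscal (-1) x) w)); auto.
  apply functional_extensionality; intro x. rewrite scalN1; auto.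
Qed.

Lemma absorb {Y : TLS} (U : Y -> Prop) x y : is_open U -> U x ->
  exists eps, 0 < eps /\ forall s, Rabs s < eps -> U (vadd x (vscal s y)).
Proof.
  intros HU Hx.
  assert (Hx' : U (vadd (vscal 0 y) x)) by (rewrite scal0, add0l; auto).
  destruct (vadd_cont _ U _ _ HU Hx') as [V [W [HV [HW [HV0 [HWx HVW]]]]]].
  destruct (vscal_cont _ V 0 y HV HV0) as [eps [V2 [Heps [HV2 [HV2y HV2V]]]]].
  exists eps; split; auto. intros s Hs. rewrite vaddC. apply HVW; auto.
  apply HV2V; auto. rewrite Rminus_0_r; auto.
Qed.

Lemma int_open {Y : TLS} (C : Y -> Prop) : is_open (set_int C).
Proof.
  apply open_of_local. intros x [U [HU [HUx HUC]]].
  exists U; split; auto; split; auto. intros y Hy. exists U; auto.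
Qed.

Lemma int_sub {Y : TLS} (C : Y -> Prop) z : set_int C z -> C z.
Proof. intros [U [_ [HU HUC]]]. apply HUC; auto. Qed.

Lemma cone_add {Y : TLS} (C : Y -> Prop) : good_cone C ->
  forall x y, C x -> C y -> C (vadd x y).
Proof.
  intros [Hcone [Hconv _]] x y Hx Hy.
  assert (H := Hconv (1/2) x y ltac:(lra) Hx Hy).
  assert (H2 := Hcone 2 _ ltac:(lra) H).
  replace (vadd x y) with (vscal 2 (vadd (vscal (1 / 2) x) (vscal (1 - 1 / 2) y))); auto.
  vsolve_f.
Qed.

Lemma int_addC {Y : TLS} (C : Y -> Prop) : good_cone C ->
  forall c z, C c -> set_int C z -> set_int C (vadd c z).
Proof.
  intros hC c z Hc [U [HU [HUz HUC]]].
  exists (fun w => U (vadd w (vopp c))); split; [apply open_pre_add; auto|split].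
  - replace (vadd (vadd c z) (vopp c)) with z by vsolve; auto.
  - intros w Hw. replace w with (vadd (vadd w (vopp c)) c) by vsolve.
    apply (cone_add C hC); auto.
Qed.

Lemma inf_lt_ex S r : ~ Rbar_le (Finite r) (Rbar_inf S) -> exists s, S s /\ ~ Rbar_le (Finite r) s.
Proof.
  intros H. apply NNPP; intro H'. apply H. apply inf_ge. intros s Hs.
  apply NNPP; intro H2. apply H'; eauto.
Qed.

Lemma lt_opp x y T : Rbar_le x (Finite T) -> Rbar_lt (Finite T) y -> Rbar_lt (Rbar_opp y) (Rbar_opp x).
Proof.
  unfold Rbar_lt; destruct x as [a| |], y as [b| |]; simpl; intros H1 [H2 H3]; try tauto;
  split; try lra; try discriminate; intro E; injection E; intro; apply H3; f_equal; lra.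
Qed.

Lemma lt_of_le r p x : r < p -> Rbar_le (Finite p) x -> Rbar_lt (Finite r) x.
Proof.
  unfold Rbar_lt; destruct x as [a| |]; simpl; intros H1 H2; split; try lra; try discriminate; auto.
  intro E; injection E; lra.
Qed.

Lemma fold_max_cases (x0 : R) l : fold_right Rmax x0 l = x0 \/ In (fold_right Rmax x0 l) l.
Proof.
  induction l as [|a l IH]; simpl; auto.
  destruct (Rle_dec a (fold_right Rmax x0 l)).
  - rewrite Rmax_right by auto. destruct IH as [E | IH]; [left; exact E| right; right; exact IH].
  - rewrite Rmax_left by lra. right; left; reflexivity.
Qed.
Lemma fold_max_ge (x0 x : R) l : In x l -> x <= fold_right Rmax x0 l.
Proof.
  induction l as [|a l IH]; simpl; [tauto|]. intros [->|H].
  - apply Rmax_l.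
  - eapply Rle_trans; [apply IH; auto| apply Rmax_r].
Qed.
Lemma fold_min_cases (x0 : R) l : fold_right Rmin x0 l = x0 \/ In (fold_right Rmin x0 l) l.
Proof.
  induction l as [|a l IH]; simpl; auto.
  destruct (Rle_dec a (fold_right Rmin x0 l)).
  - rewrite Rmin_left by auto. right; left; reflexivity.
  - rewrite Rmin_right by lra. destruct IH as [E | IH]; [left; exact E| right; right; exact IH].
Qed.
Lemma fold_min_le (x0 x : R) l : In x l -> fold_right Rmin x0 l <= x.
Proof.
  induction l as [|a l IH]; simpl; [tauto|]. intros [->|H].
  - apply Rmin_l.
  - eapply Rle_trans; [apply Rmin_r| apply IH; auto].
Qed.

Definition ph {Y : TLS} (C : Y -> Prop) (k y : Y) : Rbar :=
  Rbar_inf (fun v => exists t, v = Finite t /\ C (vadd y (vscal t k))).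
Definition NN {Y : TLS} (C : Y -> Prop) (k : Y) (A : Y -> Prop) : Rbar :=
  Rbar_inf (fun v => exists t, v = Finite t /\ exists a, A a /\ C (vadd a (vscal t k))).
Definition GL {Y : TLS} (C : Y -> Prop) (k : Y) (A : Y -> Prop) : Rbar :=
  Rbar_sup (fun v => exists b, A b /\ v = ph C k b).

Lemma phi_eq {Y : TLS} (C : Y -> Prop) (k y : Y) :
  phi C (vopp k) (set_single vzero) y = ph C k y.
Proof.
  unfold phi, ph. f_equal. apply functional_extensionality; intro v.
  apply propositional_extensionality; split.
  - intros [t [-> [a [c [Ha [Hc Hy]]]]]]. exists t; split; auto.
    unfold set_single in Ha; subst a y.
    replace (vadd (vadd (vadd (vscal t (vopp k)) vzero) c) (vscal t k)) with c by vsolve; auto.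
  - intros [t [-> Hc]]. exists t; split; auto. exists vzero, (vadd y (vscal t k)).
    split; [reflexivity|split; auto]. vsolve.
Qed.

Lemma N_eq {Y : TLS} (C : Y -> Prop) (k : Y) A :
  phi C (vopp k) (set_opp A) (vopp vzero) = NN C k A.
Proof.
  unfold phi, NN. f_equal. apply functional_extensionality; intro v.
  apply propositional_extensionality; split.
  - intros [t [-> [a' [c [[a [Ha ->]] [Hc H]]]]]]. exists t; split; auto. exists a; split; auto.
    assert (E1 : c = vadd (vadd (vadd (vscal t (vopp k)) (vopp a)) c) (vadd a (vscal t k))) by vsolve.
    rewrite <- H in E1.
    assert (E2 : vadd (vopp vzero) (vadd a (vscal t k)) = vadd a (vscal t k)) by vsolve.
    rewrite E2 in E1. rewrite <- E1; auto.
  - intros [t [-> [a [Ha Hc]]]]. exists t; split; auto. exists (vopp a), (vadd a (vscal t k)).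
    split; [exists a; auto|split; auto]. vsolve.
Qed.

Lemma ve_eq {Y : TLS} (C : Y -> Prop) (k : Y) A :
  v_e C (vopp k) A = (Rbar_opp (GL C k A), Rbar_opp (NN C k A)).
Proof.
  unfold v_e, w_e, Gu, Gl, GL. f_equal.
  - f_equal. f_equal. apply functional_extensionality; intro v.
    apply propositional_extensionality; split; intros [b [Hb ->]]; exists b; split; auto;
    rewrite phi_eq; auto.
  - f_equal. apply Rbar_le_antisym.
    + apply sup_le. intros s [b [[a [Ha ->]] ->]]. unfold set_single in Ha; subst a.
      rewrite N_eq. apply Rbar_le_refl.
    + rewrite <- N_eq. apply sup_ge. exists (vopp vzero); split; auto. exists vzero; split; reflexivity.
Qed.


Lemma C0 {Y : TLS} (C : Y -> Prop) (k : Y) : good_cone C -> set_int C k -> C vzero.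
Proof.
  intros [Hcone _] Hk. rewrite <- (scal0 k). apply Hcone; [lra|]. apply int_sub; auto.
Qed.

Lemma L_up {Y : TLS} (C : Y -> Prop) (k : Y) : good_cone C -> set_int C k ->
  forall y t t', C (vadd y (vscal t k)) -> t <= t' -> C (vadd y (vscal t' k)).
Proof.
  intros hC Hk y t t' H Ht.
  replace (vadd y (vscal t' k)) with (vadd (vadd y (vscal t k)) (vscal (t' - t) k)) by vsolve.
  apply (cone_add C hC); auto. destruct hC as [Hcone _]. apply Hcone; [lra|]. apply int_sub; auto.
Qed.

Lemma F1 {Y : TLS} (C : Y -> Prop) (k : Y) : good_cone C -> set_int C k ->
  forall y, exists T, C (vadd y (vscal T k)).
Proof.
  intros hC [U [HU [HUk HUC]]] y.
  destruct (absorb U k y HU HUk) as [eps [Heps H]].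
  set (s := eps / 2).
  assert (Hs : U (vadd k (vscal s y))) by (apply H; unfold s; rewrite Rabs_right; lra).
  exists (1 / s). destruct hC as [Hcone _].
  assert (H2 := Hcone (1 / s) _ ltac:(unfold s; apply Rlt_le; apply Rdiv_lt_0_compat; lra) (HUC _ Hs)).
  replace (vadd y (vscal (1 / s) k)) with (vscal (1 / s) (vadd k (vscal s y))); auto.
  assert (s <> 0) by (unfold s; lra). vsolve_f.
Qed.

Lemma Lall {Y : TLS} (C : Y -> Prop) (k : Y) (A : Y -> Prop) : good_cone C -> set_int C k ->
  (forall t, exists a, A a /\ C (vadd a (vscal t k))) -> is_whole (set_sub A C).
Proof.
  intros hC Hk H y.
  destruct (F1 C k hC Hk (vopp y)) as [T HT].
  destruct (H (-T)) as [a [Ha Hc]].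
  exists a, (vopp (vadd (vadd a (vscal (-T) k)) (vadd (vopp y) (vscal T k)))).
  split; auto. split.
  - exists (vadd (vadd a (vscal (-T) k)) (vadd (vopp y) (vscal T k))). split; auto.
    apply (cone_add C hC); auto.
  - vsolve.
Qed.

Lemma ph_fin {Y : TLS} (C : Y -> Prop) (k : Y) (A : Y -> Prop) : good_cone C -> set_int C k ->
  ~ is_whole (set_sub A C) -> forall a, A a -> exists p, ph C k a = Finite p.
Proof.
  intros hC Hk HA a Ha. destruct (ph C k a) as [r| |] eqn:E.
  - eauto.
  - exfalso. destruct (F1 C k hC Hk a) as [T HT].
    assert (Rbar_le (ph C k a) (Finite T)) by (apply inf_le; eauto).
    rewrite E in H; simpl in H; auto.
  - exfalso. apply HA. apply (Lall C k A hC Hk). intros t. exists a; split; auto.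
    assert (~ Rbar_le (Finite t) (ph C k a)) by (rewrite E; simpl; auto).
    destruct (inf_lt_ex _ _ H) as [s [[t' [-> Hc]] Hs]]. simpl in Hs.
    apply (L_up C k hC Hk a t'); auto. lra.
Qed.

Lemma NN_fin {Y : TLS} (C : Y -> Prop) (k : Y) (A : Y -> Prop) : good_cone C -> set_int C k ->
  P0 C A -> exists n, NN C k A = Finite n.
Proof.
  intros hC Hk [[a0 Ha0] [_ HA]]. destruct (NN C k A) as [r| |] eqn:E.
  - eauto.
  - exfalso. destruct (F1 C k hC Hk a0) as [T HT].
    assert (Rbar_le (NN C k A) (Finite T)) by (apply inf_le; eauto).
    rewrite E in H; simpl in H; auto.
  - exfalso. apply HA. apply (Lall C k A hC Hk). intros t.
    assert (~ Rbar_le (Finite t) (NN C k A)) by (rewrite E; simpl; auto).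
    destruct (inf_lt_ex _ _ H) as [s [[t' [-> [a [Ha Hc]]]] Hs]]. simpl in Hs.
    exists a; split; auto. apply (L_up C k hC Hk a t'); auto. lra.
Qed.

Lemma mono1 {Y : TLS} (C : Y -> Prop) (k : Y) (A B : Y -> Prop) : good_cone C ->
  set_incl B (set_add A C) -> Rbar_le (GL C k B) (GL C k A).
Proof.
  intros hC H. apply sup_le. intros s [b [Hb ->]].
  destruct (H b Hb) as [a [c [Ha [Hc ->]]]].
  apply Rbar_le_trans with (ph C k a); [|apply sup_ge; eauto].
  apply inf_ge. intros v [t [-> Ht]]. apply inf_le. exists t; split; auto.
  replace (vadd (vadd a c) (vscal t k)) with (vadd (vadd a (vscal t k)) c) by vsolve.
  apply (cone_add C hC); auto.
Qed.

Lemma mono2 {Y : TLS} (C : Y -> Prop) (k : Y) (A B : Y -> Prop) : good_cone C ->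
  set_incl A (set_sub B C) -> Rbar_le (NN C k B) (NN C k A).
Proof.
  intros hC H. apply inf_ge. intros v [t [-> [a [Ha Hc]]]]. apply inf_le. exists t; split; auto.
  destruct (H a Ha) as [b [m [Hb [[c0 [Hc0 ->]] ->]]]].
  exists b; split; auto.
  replace (vadd b (vscal t k)) with (vadd (vadd (vadd b (vopp c0)) (vscal t k)) c0) by vsolve.
  apply (cone_add C hC); auto.
Qed.

Lemma strict1 {Y : TLS} (C : Y -> Prop) (k : Y) (A B : Y -> Prop) : good_cone C -> set_int C k ->
  P0 C A -> P0 C B -> K_compact C B -> set_incl B (set_add A (set_int C)) ->
  exists T, Rbar_le (GL C k B) (Finite T) /\ Rbar_lt (Finite T) (GL C k A).
Proof.
  intros hC Hk [_ [_ HA]] [[b0 Hb0] _] HK H.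
  assert (Hcov : forall b, B b -> exists t, Rbar_lt (Finite t) (GL C k A) /\
                   set_int C (vadd b (vscal t k))).
  { intros b Hb. destruct (H b Hb) as [a [k' [Ha [Hk' ->]]]].
    destruct (ph_fin C k A hC Hk HA a Ha) as [p Hp].
    destruct Hk' as [U' [HU' [HU'k HU'C]]].
    destruct (absorb U' k' k HU' HU'k) as [eps [Heps Habs]].
    set (d := eps / 2).
    assert (Hd : U' (vadd k' (vscal (- d) k))) by (apply Habs; unfold d; rewrite Rabs_left; lra).
    assert (~ Rbar_le (Finite (p + d)) (ph C k a)) by (rewrite Hp; simpl; unfold d; lra).
    destruct (inf_lt_ex _ _ H0) as [s [[s0 [-> Hs0]] Hlt]]. simpl in Hlt.
    exists (s0 - d). split.
    - apply (lt_of_le _ p); [lra|]. rewrite <- Hp. apply sup_ge; eauto.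
    - replace (vadd (vadd a k') (vscal (s0 - d) k)) with
        (vadd (vadd a (vscal s0 k)) (vadd k' (vscal (- d) k))) by vsolve.
      apply (int_addC C hC); auto. exists U'; auto. }
  set (I := {t : R | Rbar_lt (Finite t) (GL C k A)}).
  destruct (HK I (fun i y => set_int C (vadd y (vscal (proj1_sig i) k)))) as [l Hl].
  - intros i. apply open_pre_add. apply int_open.
  - intros b Hb. destruct (Hcov b Hb) as [t [Ht Hint]].
    exists (exist _ t Ht). exists b, vzero. split; [simpl; auto|split].
    + apply (C0 C k hC Hk).
    + rewrite vadd0; auto.
  - destruct (Hcov b0 Hb0) as [t0 [Ht0 _]].
    set (T := fold_right Rmax t0 (map (@proj1_sig _ _) l)).
    exists T. split.
    + apply sup_le. intros s [b [Hb ->]].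
      destruct (Hl b Hb) as [i [Hin [u [c [Hu [Hc ->]]]]]].
      apply inf_le. exists T; split; auto.
      apply (L_up C k hC Hk _ (proj1_sig i)).
      * replace (vadd (vadd u c) (vscal (proj1_sig i) k)) with
          (vadd (vadd u (vscal (proj1_sig i) k)) c) by vsolve.
        apply (cone_add C hC); auto. apply int_sub; auto.
      * apply fold_max_ge. apply in_map; auto.
    + destruct (fold_max_cases t0 (map (@proj1_sig _ _) l)) as [E|E]; fold T in E.
      * rewrite E; auto.
      * apply in_map_iff in E. destruct E as [[x Hx] [Ex _]]. simpl in Ex. rewrite <- Ex; auto.
Qed.

Lemma strict2 {Y : TLS} (C : Y -> Prop) (k : Y) (A B : Y -> Prop) : good_cone C -> set_int C k ->
  P0 C A -> K_compact (set_opp C) A -> set_incl A (set_sub B (set_int C)) ->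
  exists T, Rbar_le (NN C k B) (Finite T) /\ Rbar_lt (Finite T) (NN C k A).
Proof.
  intros hC Hk HPA HK H.
  destruct (NN_fin C k A hC Hk HPA) as [n Hn].
  destruct HPA as [[a0 Ha0] _].
  set (Od := fun (d : R) (y : Y) => exists b, B b /\ set_int C (vadd (vopp y) (vadd b (vscal (- d) k)))).
  assert (Hcov : forall a, A a -> exists d, 0 < d /\ Od d a).
  { intros a Ha. destruct (H a Ha) as [b [m [Hb [[k' [Hk' ->]] ->]]]].
    destruct Hk' as [U' [HU' [HU'k HU'C]]].
    destruct (absorb U' k' k HU' HU'k) as [eps [Heps Habs]].
    set (d := eps / 2).
    assert (Hd : U' (vadd k' (vscal (- d) k))) by (apply Habs; unfold d; rewrite Rabs_left; lra).
    exists d; split; [unfold d; lra|]. exists b; split; auto.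
    replace (vadd (vopp (vadd b (vopp k'))) (vadd b (vscal (- d) k))) with
      (vadd k' (vscal (- d) k)) by vsolve.
    exists U'; auto. }
  assert (Hop : forall d, is_open (Od d)).
  { intros d. apply open_of_local. intros y [b [Hb Hint]].
    exists (fun y' => set_int C (vadd (vopp y') (vadd b (vscal (- d) k)))).
    split; [apply open_pre_oppadd; apply int_open|split; auto].
    intros y' Hy'. exists b; auto. }
  set (I := {d : R | 0 < d}).
  destruct (HK I (fun i => Od (proj1_sig i))) as [l Hl].
  - intros i; apply Hop.
  - intros a Ha. destruct (Hcov a Ha) as [d [Hd HOd]].
    exists (exist _ d Hd). exists a, (vopp vzero). split; [simpl; auto|split].
    + exists vzero; split; auto. apply (C0 C k hC Hk).
    + vsolve.
  - destruct (Hcov a0 Ha0) as [d0 [Hd0 _]].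
    set (D := fold_right Rmin d0 (map (@proj1_sig _ _) l)).
    assert (HD : 0 < D).
    { destruct (fold_min_cases d0 (map (@proj1_sig _ _) l)) as [E|E]; fold D in E.
      - rewrite E; auto.
      - apply in_map_iff in E. destruct E as [[x Hx] [Ex _]]. simpl in Ex. rewrite <- Ex; auto. }
    assert (Key : forall a t, A a -> C (vadd a (vscal t k)) -> Rbar_le (NN C k B) (Finite (t - D))).
    { intros a t Ha Hc. destruct (Hl a Ha) as [i [Hin [u [m [Hu [[c [Hc' ->]] ->]]]]]].
      destruct Hu as [b [Hb Hz]].
      apply inf_le. exists (t - D); split; auto. exists b; split; auto.
      set (d := proj1_sig i) in *.
      assert (HdD : D <= d) by (apply fold_min_le; apply in_map; auto).
      replace (vadd b (vscal (t - D) k)) with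
        (vadd (vadd (vadd (vadd (vopp u) (vadd b (vscal (- d) k))) (vadd (vadd u (vopp c)) (vscal t k))) c)
              (vscal (d - D) k)) by vsolve.
      destruct hC as [Hcone Hr].
      apply (cone_add C (conj Hcone Hr)); [apply (cone_add C (conj Hcone Hr)); [apply (cone_add C (conj Hcone Hr))|]|]; auto.
      - apply int_sub; auto.
      - apply Hcone; [lra|]. apply int_sub; auto. }
    assert (~ Rbar_le (Finite (n + D / 2)) (NN C k A)) by (rewrite Hn; simpl; lra).
    destruct (inf_lt_ex _ _ H0) as [s [[t [-> [a [Ha Hc]]]] Hlt]]. simpl in Hlt.
    exists (n - D / 2). split.
    + apply Rbar_le_trans with (Finite (t - D)); [apply (Key a t); auto|simpl; lra].
    + rewrite Hn. apply (lt_of_le _ n); [lra|simpl; lra].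
Qed.

Theorem mainTheorem5 (Y : TLS) (C : Y -> Prop) (hC : good_cone C)
  (e : Y) (he : set_opp (set_int C) e) :
  (forall A B : Y -> Prop, P0 C A -> P0 C B -> set_le_s C A B ->
     pair_le (v_e C e A) (v_e C e B)) /\
  (forall A B : Y -> Prop, P0 C A -> P0 C B -> mpC_compact C A -> mpC_compact C B ->
     set_lt_s C A B -> pair_lt (v_e C e A) (v_e C e B)) /\
  (forall A B : Y -> Prop, P0 C A -> P0 C B -> s_class C B A ->
     v_e C e A = v_e C e B).
Proof.
  destruct he as [k [Hk ->]].
  assert (P1 : forall A B : Y -> Prop, set_le_s C A B -> pair_le (v_e C (vopp k) A) (v_e C (vopp k) B)).
  { intros A B [H1 H2]. rewrite !ve_eq. split; simpl; apply Rbar_opp_le.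
    - apply mono1; auto.
    - apply mono2; auto. }
  split; [|split].
  - intros A B _ _ H; apply P1; auto.
  - intros A B HA HB [HAc HAo] [HBc HBo] [H1 H2]. rewrite !ve_eq. split; simpl.
    + destruct (strict1 C k A B hC Hk HA HB HBc H1) as [T [T1 T2]]. eapply lt_opp; eauto.
    + destruct (strict2 C k A B hC Hk HA HAo H2) as [T [T1 T2]]. eapply lt_opp; eauto.
  - intros A B _ _ [H1 H2].
    destruct (P1 _ _ H1) as [a1 a2]. destruct (P1 _ _ H2) as [b1 b2].
    destruct (v_e C (vopp k) A), (v_e C (vopp k) B); simpl in *.
    f_equal; apply Rbar_le_antisym; auto.
Qed.
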